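(* Let $\Sigma$ be a signature and $\mathbf V$ a full subcategory of $\mathbf{Alg}(\Sigma)$. Then $\mathbf V$ is closed under surjective images, small products and strong subobjects if and only if there exist a set $X$ and an unconditional theory $\Lambda$ in the language $(\Sigma,X)$ such that $\mathbf V=\mathbf{Mod}(\Lambda)$.
   Context: $H$ is a frame with bottom $\bot$. An $H$-fuzzy set is a pair $(A,\mu_A)$ of a set $A$ and a function $\mu_A:A\to H$; an arrow $f:(A,\mu_A)\to(B,\mu_B)$ is a function with $\mu_A(x)\le\mu_B(f(x))$; they form $\mathbf{Fuz}_H$. For $n\ge1$, $(A,\mu_A)^n=(A^n,\mu)$ with $\mu(a_1,\dots,a_n)=\bigwedge_i\mu_A(a_i)$. A signature $\Sigma=(O,\mathrm{ar},C)$ consists of a set $O$ of operation symbols with arity $\mathrm{ar}:O\to\{1,2,3,\dots\}$ and a set $C$ of constant symbols. A language is a pair $\mathcal L=(\Sigma,X)$ with $X$ a set of variables. $\mathrm{Terms}(\mathcal L)$ is the smallest set containing $X\sqcup C$ and containing $f(t_1,\dots,t_{\mathrm{ar}(f)})$ whenever $f\in O$ and all $t_i\in\mathrm{Terms}(\mathcal L)$. A formula is either an equation $s\equiv t$ ($s,t$ terms) or a membership proposition $\mathsf E_l(t)$ with $l\in H$ and $t$ a term. A sequent $\Gamma\vdash\psi$ is a pair of a (possibly infinite) set $\Gamma$ of formulas and a formula $\psi$; $\vdash\psi$ means $\emptyset\vdash\psi$. A fuzzy theory in $\mathcal L$ is a set of sequents. A theory is unconditional if all its sequents have the form $\vdash\phi$.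 A $\Sigma$-algebra $\mathcal A=((A,\mu_A),\Sigma^{\mathcal A})$ is an $H$-fuzzy set $(A,\mu_A)$ together with, for each $f\in O$, an arrow $f^{\mathcal A}:(A,\mu_A)^{\mathrm{ar}(f)}\to(A,\mu_A)$ of $\mathbf{Fuz}_H$ and, for each $c\in C$, an element $c^{\mathcal A}\in A$. A morphism of $\Sigma$-algebras is an arrow of $\mathbf{Fuz}_H$ between the carriers preserving all constants and commuting with all operations; this gives $\mathbf{Alg}(\Sigma)$, whose products are the products of carriers in $\mathbf{Fuz}_H$ (membership the infimum of the components) with componentwise operations and constants. An assignment is a function $\iota:X\to A$; evaluation: $x^{\mathcal A,\iota}=\iota(x)$, $c^{\mathcal A,\iota}=c^{\mathcal A}$, $f(t_1,\dots,t_n)^{\mathcal A,\iota}=f^{\mathcal A}(t_1^{\mathcal A,\iota},\dots,t_n^{\mathcal A,\iota})$. $\mathcal A\vDash_\iota s\equiv t$ iff $s^{\mathcal A,\iota}=t^{\mathcal A,\iota}$; $\mathcal A\vDash_\iota\mathsf E_l(t)$ iff $l\le\mu_A(t^{\mathcal A,\iota})$. $\mathcal A$ satisfies $\Gamma\vdash\psi$ if for every assignment $\iota$ with $\mathcal A\vDash_\iota\phi$ for all $\phi\in\Gamma$ one has $\mathcal A\vDash_\iota\psi$. $\mathcal A$ is a model of a theory $\Lambda$ if it satisfies every sequent of $\Lambda$; $\mathbf{Mod}(\Lambda)$ is the full subcategory of $\mathbf{Alg}(\Sigma)$ on the models of $\Lambda$. Closure conditions on $\mathbf V$: closed under surjective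 images means that if $\mathcal A\in\mathbf V$ and $e:\mathcal A\to\mathcal B$ is a morphism with surjective underlying function then $\mathcal B\in\mathbf V$; closed under strong subobjects means that if $\mathcal B\in\mathbf V$ and $m:\mathcal A\to\mathcal B$ is a morphism whose underlying function is injective with $\mu_B(m(a))=\mu_A(a)$ for all $a$, then $\mathcal A\in\mathbf V$; closed under small products means the product of any set-indexed family of members of $\mathbf V$ is in $\mathbf V$. *)

(* Defs.v *)
From mathcomp Require Import all_boot.
Set Implicit Arguments.
Unset Strict Implicit.
Unset Printing Implicit Defensive.

Record frame := Frame {
  fcar :> Type;
  fle : fcar -> fcar -> Prop;
  fle_refl : forall x, fle x x;
  fle_trans : forall x y z, fle x y -> fle y z -> fle x z;
  fle_anti : forall x y, fle x y -> fle y x -> x = y;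
  fsup : (fcar -> Prop) -> fcar;
  fsup_ub : forall S x, S x -> fle x (fsup S);
  fsup_least : forall S y, (forall x, S x -> fle x y) -> fle (fsup S) y;
  finf : (fcar -> Prop) -> fcar;
  finf_lb : forall S x, S x -> fle (finf S) x;
  finf_greatest : forall S y, (forall x, S x -> fle y x) -> fle y (finf S);
  (* frame distributive law: a /\ (\/ S) = \/ { a /\ s | s in S } *)
  fmeet_sup : forall a S,
    finf (fun x => x = a \/ x = fsup S) =
    fsup (fun y => exists2 s, S s & y = finf (fun x => x = a \/ x = s))
}.

Definition finfI (H : frame) (I : Type) (f : I -> H) : H :=
  finf (fun x => exists i, x = f i).

Definition fbot (H : frame) : H := fsup (fun _ => False).

Record signature := Signature {
  sig_op : Type;
  sig_ar : sig_op -> nat;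
  sig_ar_pos : forall o, 0 < sig_ar o;
  sig_const : Type
}.

(** * Sigma-algebras on H-fuzzy sets.  [alg_mem] is mu_A; an operation
    f^A : (A, mu_A)^n -> (A, mu_A) takes an n-tuple ('I_n -> A) and must be an
    arrow of Fuz_H: /\_i mu_A(a_i) <= mu_A(f^A(a)). *)
Record algebra (H : frame) (S : signature) := Algebra {
  alg_car :> Type;
  alg_mem : alg_car -> H;
  alg_op : forall o : sig_op S, ('I_(sig_ar o) -> alg_car) -> alg_car;
  alg_op_mem : forall o (a : 'I_(sig_ar o) -> alg_car),
    fle (finfI (fun i => alg_mem (a i))) (alg_mem (alg_op a));
  alg_const : sig_const S -> alg_car
}.

Definition is_morphism (H : frame) (S : signature) (A B : algebra H S)
  (f : A -> B) : Prop :=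
  (forall x, fle (alg_mem x) (alg_mem (f x))) /\
  (forall c, f (alg_const A c) = alg_const B c) /\
  (forall o (a : 'I_(sig_ar o) -> A),
      f (alg_op a) = alg_op (fun i => f (a i))).

Lemma prod_op_mem (H : frame) (S : signature) (I : Type) (A : I -> algebra H S)
  (o : sig_op S) (a : 'I_(sig_ar o) -> forall i, A i) :
  fle (finfI (fun j => finfI (fun i => alg_mem (a j i))))
      (finfI (fun i => alg_mem (alg_op (fun j => a j i)))).
Proof.
apply: finf_greatest => x [i ->].
apply: fle_trans (alg_op_mem (fun j => a j i)).
apply: finf_greatest => y [j ->].
apply: fle_trans (finf_lb (ex_intro _ j erefl)) _.
exact: finf_lb (ex_intro _ i erefl).
Qed.

Definition prod_alg (H : frame) (S : signature) (I : Type)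
  (A : I -> algebra H S) : algebra H S :=
  @Algebra H S (forall i, A i)
    (fun x => finfI (fun i => alg_mem (x i)))
    (fun o a i => alg_op (fun j => a j i))
    (@prod_op_mem H S I A)
    (fun c i => alg_const (A i) c).

Definition closed_surj_images (H : frame) (S : signature)
  (V : algebra H S -> Prop) : Prop :=
  forall (A B : algebra H S) (e : A -> B),
    V A -> is_morphism e -> (forall y, exists x, e x = y) -> V B.

Definition closed_strong_subobjects (H : frame) (S : signature)
  (V : algebra H S -> Prop) : Prop :=
  forall (A B : algebra H S) (m : A -> B),
    V B -> is_morphism m -> injective m ->
    (forall a, alg_mem (m a) = alg_mem a) -> V A.

Definition closed_products (H : frame) (S : signature)
  (V : algebra H S -> Prop) : Prop :=
  forall (I : Type) (A : I -> algebra H S),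
    (forall i, V (A i)) -> V (prod_alg A).

Inductive term (S : signature) (X : Type) : Type :=
  | TVar : X -> term S X
  | TConst : sig_const S -> term S X
  | TApp : forall o : sig_op S, ('I_(sig_ar o) -> term S X) -> term S X.

Inductive formula (H : frame) (S : signature) (X : Type) : Type :=
  | FEq : term S X -> term S X -> formula H S X
  | FMem : H -> term S X -> formula H S X.

Record sequent (H : frame) (S : signature) (X : Type) := Sequent {
  seq_hyps : formula H S X -> Prop;
  seq_concl : formula H S X
}.

Definition theory (H : frame) (S : signature) (X : Type) :=
  sequent H S X -> Prop.

Definition unconditional (H : frame) (S : signature) (X : Type)
  (L : theory H S X) : Prop :=
  forall s, L s -> forall phi, ~ seq_hyps s phi.

Fixpoint eval (H : frame) (S : signature) (X : Type) (A : algebra H S)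
  (iota : X -> A) (t : term S X) : A :=
  match t with
  | TVar x => iota x
  | TConst c => alg_const A c
  | TApp o ts => alg_op (fun j => eval iota (ts j))
  end.

Definition sat (H : frame) (S : signature) (X : Type) (A : algebra H S)
  (iota : X -> A) (phi : formula H S X) : Prop :=
  match phi with
  | FEq s t => eval iota s = eval iota t
  | FMem l t => fle l (alg_mem (eval iota t))
  end.

Definition satisfies_sequent (H : frame) (S : signature) (X : Type)
  (A : algebra H S) (s : sequent H S X) : Prop :=
  forall iota : X -> A,
    (forall phi, seq_hyps s phi -> sat iota phi) -> sat iota (seq_concl s).

Definition is_model (H : frame) (S : signature) (X : Type)
  (L : theory H S X) (A : algebra H S) : Prop :=
  forall s, L s -> satisfies_sequent A s.

(* Main.v *)
From Stdlib Require Import Classical.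
Require Import Defs.
From mathcomp Require Import all_boot.
From Stdlib Require Import ClassicalEpsilon FunctionalExtensionality PropExtensionality ProofIrrelevance.
From Stdlib Require List.
Set Implicit Arguments.
Unset Strict Implicit.
Unset Printing Implicit Defensive.

Lemma finfI_lb (H : frame) (I : Type) (f : I -> H) i : fle (finfI f) (f i).
Proof. exact: finf_lb (ex_intro _ i erefl). Qed.
Lemma finfI_glb (H : frame) (I : Type) (f : I -> H) y :
  (forall i, fle y (f i)) -> fle y (finfI f).
Proof. move=> h; apply: finf_greatest => x [i ->]; exact: h. Qed.

Lemma eval_morph (H : frame) (S : signature) (X : Type) (A B : algebra H S)
  (f : A -> B) (iota : X -> A) t :
  is_morphism f -> f (eval iota t) = eval (fun x => f (iota x)) t.
Proof.
move=> [_ [hc ho]]; elim: t => [x|c|o ts IH] //=.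
rewrite ho; f_equal; apply: functional_extensionality => j; exact: IH.
Qed.

Fixpoint rename (S : signature) (X Y : Type) (r : X -> Y) (t : term S X) : term S Y :=
  match t with
  | TVar x => @TVar S Y (r x)
  | TConst c => @TConst S Y c
  | TApp o ts => @TApp S Y o (fun j => rename r (ts j))
  end.

Lemma eval_rename (H : frame) (S : signature) (X Y : Type) (A : algebra H S)
  (r : X -> Y) (iota : Y -> A) t :
  eval iota (rename r t) = eval (fun x => iota (r x)) t.
Proof.
elim: t => [x|c|o ts IH] //=.
f_equal; apply: functional_extensionality => j; exact: IH.
Qed.

Fixpoint fvars (S : signature) (X : Type) (t : term S X) : seq X :=
  match t with
  | TVar x => [:: x]
  | TConst _ => [::]
  | TApp o ts => flatten [seq fvars (ts j) | j <- enum 'I_(sig_ar o)]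
  end.

Lemma In_flatten_map (I X : Type) (f : I -> seq X) (l : seq I) j x :
  List.In j l -> List.In x (f j) -> List.In x (flatten (map f l)).
Proof.
elim: l => [|y l IH] //= [<-|hj] hx; apply List.in_or_app; [left|right] => //.
exact: IH.
Qed.

Lemma mem_In (T : eqType) (x : T) (s : seq T) : x \in s -> List.In x s.
Proof.
elim: s => [|y s IH] //=; rewrite in_cons => /orP [/eqP ->|h]; [left|right] => //.
exact: IH.
Qed.

Lemma eval_agree (H : frame) (S : signature) (X : Type) (A : algebra H S)
  (iota iota' : X -> A) t :
  (forall x, List.In x (fvars t) -> iota x = iota' x) -> eval iota t = eval iota' t.
Proof.
elim: t => [x|c|o ts IH] //= h.
- by apply: h; left.
- f_equal; apply: functional_extensionality => j; apply: IH => x hx; apply: h.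
  apply: (In_flatten_map _ _ (j:=j)) => //; apply: mem_In; exact: mem_enum.
Qed.

Record qdata (H : frame) (S : signature) (Y : Type) := QData {
  qth : term S Y -> term S Y -> Prop;
  qmu : term S Y -> H;
  qrefl : forall t, qth t t;
  qsym : forall s t, qth s t -> qth t s;
  qtrans : forall s t u, qth s t -> qth t u -> qth s u;
  qcong : forall o (ts us : 'I_(sig_ar o) -> term S Y),
     (forall j, qth (ts j) (us j)) -> qth (TApp ts) (TApp us);
  qresp : forall s t, qth s t -> qmu s = qmu t;
  qop : forall o (ts : 'I_(sig_ar o) -> term S Y),
     fle (finfI (fun j => qmu (ts j))) (qmu (TApp ts))
}.

Definition qcar (H : frame) (S : signature) (Y : Type) (d : qdata H S Y) :=
  {P : term S Y -> Prop | exists t, P = qth d t}.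

Definition cls (H : frame) (S : signature) (Y : Type) (d : qdata H S Y) (t : term S Y)
  : qcar d := exist _ (qth d t) (ex_intro _ t erefl).

Definition rep (H : frame) (S : signature) (Y : Type) (d : qdata H S Y) (c : qcar d)
  : term S Y := proj1_sig (constructive_indefinite_description _ (proj2_sig c)).

Lemma rep_spec (H : frame) (S : signature) (Y : Type) (d : qdata H S Y) (c : qcar d) :
  proj1_sig c = qth d (rep c).
Proof. rewrite /rep; case: constructive_indefinite_description => //. Qed.

Lemma qth_eq (H : frame) (S : signature) (Y : Type) (d : qdata H S Y) s t :
  qth d s = qth d t <-> qth d s t.
Proof.
split=> [e|h]; first by rewrite e; apply: qrefl.
apply: functional_extensionality => u; apply: propositional_extensionality; split.
- by move=> h'; apply: qtrans (qsym h) h'.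
- by move=> h'; apply: qtrans h h'.
Qed.

Lemma cls_eq (H : frame) (S : signature) (Y : Type) (d : qdata H S Y) s t :
  cls d s = cls d t <-> qth d s t.
Proof.
split=> [e|h].
- by apply/qth_eq; move: (f_equal (@proj1_sig _ _) e).
- rewrite /cls; move: (ex_intro _ s _) (ex_intro _ t _).
  rewrite (proj2 (qth_eq d s t) h) => p1 p2; f_equal; exact: proof_irrelevance.
Qed.

Lemma cls_rep (H : frame) (S : signature) (Y : Type) (d : qdata H S Y) (c : qcar d) :
  cls d (rep c) = c.
Proof.
case: c => P hP; rewrite /cls.
move: (ex_intro _ _ _); rewrite -(rep_spec (exist _ P hP)) /= => p; f_equal.
exact: proof_irrelevance.
Qed.

Lemma rep_cls (H : frame) (S : signature) (Y : Type) (d : qdata H S Y) t :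
  qth d (rep (cls d t)) t.
Proof. by apply/cls_eq; rewrite cls_rep. Qed.

Lemma quot_op_mem (H : frame) (S : signature) (Y : Type) (d : qdata H S Y) o
  (cs : 'I_(sig_ar o) -> qcar d) :
  fle (finfI (fun j => qmu d (rep (cs j))))
      (qmu d (rep (cls d (TApp (fun j => rep (cs j)))))).
Proof. rewrite (qresp (rep_cls _ _)); exact: qop. Qed.

Definition Quot (H : frame) (S : signature) (Y : Type) (d : qdata H S Y) : algebra H S :=
  @Algebra H S (qcar d) (fun c => qmu d (rep c))
    (fun o cs => cls d (TApp (fun j => rep (cs j))))
    (@quot_op_mem H S Y d)
    (fun c => cls d (TConst Y c)).

Lemma quot_op_cls (H : frame) (S : signature) (Y : Type) (d : qdata H S Y) o
  (ts : 'I_(sig_ar o) -> term S Y) :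
  @alg_op H S (Quot d) o (fun j => cls d (ts j)) = cls d (TApp ts).
Proof. apply/cls_eq; apply: qcong => j; exact: rep_cls. Qed.

Lemma quot_mem_cls (H : frame) (S : signature) (Y : Type) (d : qdata H S Y) t :
  @alg_mem H S (Quot d) (cls d t) = qmu d t.
Proof. exact: qresp (rep_cls _ _). Qed.

Lemma quot_map_morph (H : frame) (S : signature) (Y : Type) (d : qdata H S Y)
  (C : algebra H S) (g : term S Y -> C)
  (G1 : forall s t, qth d s t -> g s = g t)
  (G2 : forall (o : sig_op S) (ts : 'I_(sig_ar o) -> term S Y), g (TApp ts) = alg_op (fun j => g (ts j)))
  (G3 : forall c, g (TConst Y c) = alg_const C c)
  (G4 : forall t, fle (qmu d t) (alg_mem (g t))) :
  @is_morphism H S (Quot d) C (fun c => g (rep c)).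
Proof.
split; [|split].
- move=> c; exact: G4.
- move=> c /=; rewrite (G1 _ _ (rep_cls _ _)); exact: G3.
- move=> o cs /=; rewrite (G1 _ _ (rep_cls _ _)); exact: G2.
Qed.

Lemma quot_map_inj (H : frame) (S : signature) (Y : Type) (d : qdata H S Y)
  (C : Type) (g : term S Y -> C)
  (G5 : forall s t, g s = g t -> qth d s t) :
  injective (fun c : qcar d => g (rep c)).
Proof.
move=> c1 c2 /G5 /cls_eq; by rewrite !cls_rep.
Qed.

Lemma quot_map_surj (H : frame) (S : signature) (Y : Type) (d : qdata H S Y)
  (C : Type) (g : term S Y -> C)
  (G1 : forall s t, qth d s t -> g s = g t)
  (G7 : forall y, exists t, g t = y) :
  forall y, exists c : qcar d, g (rep c) = y.
Proof.
move=> y; case: (G7 y) => t <-; exists (cls d t); apply: G1; exact: rep_cls.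
Qed.

Lemma model_unc (H : frame) (S : signature) (X : Type) (L : theory H S X)
  (hu : unconditional L) (A : algebra H S) :
  is_model L A <-> forall s, L s -> forall iota : X -> A, sat iota (seq_concl s).
Proof.
split=> h s hs iota.
- apply: h => // phi hp; exfalso; exact: hu hs phi hp.
- move=> _; exact: h.
Qed.

Lemma models_closed (H : frame) (S : signature) (X : Type) (L : theory H S X)
  (hu : unconditional L) :
  closed_surj_images (is_model L) /\ closed_products (is_model L) /\
  closed_strong_subobjects (is_model L).
Proof.
split; [|split].
- move=> A B e /(model_unc hu) hA he hs; apply/(model_unc hu) => s hs0 iota.
  pose iota' := fun x => proj1_sig (constructive_indefinite_description _ (hs (iota x))).
  have ei : iota = fun x => e (iota' x).
    apply: functional_extensionality => x; rewrite /iota'.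
    by case: constructive_indefinite_description.
  move: (hA s hs0 iota'); rewrite ei; case: (seq_concl s) => [u v|l u] /=.
  + by rewrite -!(eval_morph _ _ he) => ->.
  + rewrite -(eval_morph _ _ he) => hl; apply: fle_trans hl _; exact: (proj1 he).
- move=> I A hA; apply/(model_unc hu) => s hs iota.
  have hp : forall i, @is_morphism H S (prod_alg A) (A i) (fun p => p i).
    move=> i; split; [|split] => //= x; exact: finfI_lb.
  have ee : forall t, eval iota t = fun i => eval (fun x => iota x i) t.
    move=> t; apply: functional_extensionality_dep => i.
    exact: (eval_morph iota t (hp i)).
  case E: (seq_concl s) => [u v|l u] /=; rewrite !ee.
  + apply: functional_extensionality_dep => i.
    by move: ((proj1 (model_unc hu _) (hA i)) s hs (fun x => iota x i)); rewrite E.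
  + apply: finfI_glb => i.
    by move: ((proj1 (model_unc hu _) (hA i)) s hs (fun x => iota x i)); rewrite E.
- move=> A B m /(model_unc hu) hB hm hinj hmem; apply/(model_unc hu) => s hs iota.
  move: (hB s hs (fun x => m (iota x))); case: (seq_concl s) => [u v|l u] /=.
  + rewrite -!(eval_morph _ _ hm); exact: hinj.
  + by rewrite -!(eval_morph _ _ hm) hmem.
Qed.

Definition realized (H : frame) (S : signature) (V : algebra H S -> Prop) (A : Type)
  (p : (term S A -> term S A -> Prop) * (term S A -> H)) : Prop :=
  exists (B : algebra H S) (iota : A -> B), V B /\
    (forall s t, p.1 s t <-> eval iota s = eval iota t) /\
    (forall t, p.2 t = alg_mem (eval iota t)).


Lemma kernel_qdata (H : frame) (S : signature) (V : algebra H S -> Prop) (A : Type)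
  (p : (term S A -> term S A -> Prop) * (term S A -> H)) (hp : realized V p) :
  (forall t, p.1 t t) /\ (forall s t, p.1 s t -> p.1 t s) /\
  (forall s t u, p.1 s t -> p.1 t u -> p.1 s u) /\
  (forall o (ts us : 'I_(sig_ar o) -> term S A),
     (forall j, p.1 (ts j) (us j)) -> p.1 (TApp ts) (TApp us)) /\
  (forall s t, p.1 s t -> p.2 s = p.2 t) /\
  (forall o (ts : 'I_(sig_ar o) -> term S A),
     fle (finfI (fun j => p.2 (ts j))) (p.2 (TApp ts))).
Proof.
case: hp => B [iota [_ [h1 h2]]].
split; [|split; [|split; [|split; [|split]]]].
- by move=> t; apply/h1.
- by move=> s t /h1 e; apply/h1.
- by move=> s t u /h1 e1 /h1 e2; apply/h1; rewrite e1.
- move=> o ts us h; apply/h1 => /=; f_equal; apply: functional_extensionality => j.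
  exact/h1.
- by move=> s t /h1 e; rewrite !h2 e.
- move=> o ts; rewrite h2 /=.
  apply: fle_trans (alg_op_mem (fun j => eval iota (ts j))).
  apply: finfI_glb => j; rewrite -h2; exact: finfI_lb.
Qed.

Definition qd_of (H : frame) (S : signature) (V : algebra H S -> Prop) (A : Type)
  (p : (term S A -> term S A -> Prop) * (term S A -> H)) (hp : realized V p)
  : qdata H S A :=
  let k := kernel_qdata hp in
  @QData H S A p.1 p.2 (proj1 k) (proj1 (proj2 k)) (proj1 (proj2 (proj2 k)))
    (proj1 (proj2 (proj2 (proj2 k)))) (proj1 (proj2 (proj2 (proj2 (proj2 k)))))
    (proj2 (proj2 (proj2 (proj2 (proj2 k))))).

Definition idx (H : frame) (S : signature) (V : algebra H S -> Prop) (A : Type) :=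
  {p : (term S A -> term S A -> Prop) * (term S A -> H) | realized V p}.

Definition qd (H : frame) (S : signature) (V : algebra H S -> Prop) (A : Type)
  (i : idx V A) : qdata H S A := qd_of (proj2_sig i).

Lemma big_qdata_ok (H : frame) (S : signature) (V : algebra H S -> Prop) (A : Type) :
  (forall t, (forall i : idx V A, qth (qd i) t t)) /\
  (forall s t, (forall i : idx V A, qth (qd i) s t) -> (forall i : idx V A, qth (qd i) t s)) /\
  (forall s t u, (forall i : idx V A, qth (qd i) s t) -> (forall i : idx V A, qth (qd i) t u) ->
     (forall i : idx V A, qth (qd i) s u)) /\
  (forall o (ts us : 'I_(sig_ar o) -> term S A),
     (forall j, (forall i : idx V A, qth (qd i) (ts j) (us j))) ->
     (forall i : idx V A, qth (qd i) (TApp ts) (TApp us))) /\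
  (forall s t, (forall i : idx V A, qth (qd i) s t) ->
     finfI (fun i : idx V A => qmu (qd i) s) = finfI (fun i : idx V A => qmu (qd i) t)) /\
  (forall o (ts : 'I_(sig_ar o) -> term S A),
     fle (finfI (fun j => finfI (fun i : idx V A => qmu (qd i) (ts j))))
         (finfI (fun i : idx V A => qmu (qd i) (TApp ts)))).
Proof.
split; [|split; [|split; [|split; [|split]]]].
- move=> t i; exact: qrefl.
- move=> s t h i; exact: qsym.
- move=> s t u h1 h2 i; exact: qtrans (h1 i) (h2 i).
- move=> o ts us h i; apply: qcong => j; exact: h.
- move=> s t h; f_equal; apply: functional_extensionality => i; exact: qresp.
- move=> o ts; apply: finfI_glb => i; apply: fle_trans (qop _ _).
  apply: finfI_glb => j; apply: fle_trans (finfI_lb _ j) _; exact: finfI_lb.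
Qed.

Definition bigq (H : frame) (S : signature) (V : algebra H S -> Prop) (A : Type) : qdata H S A :=
  let k := big_qdata_ok V A in
  @QData H S A (fun s t => forall i : idx V A, qth (qd i) s t)
    (fun t => finfI (fun i : idx V A => qmu (qd i) t))
    (proj1 k) (proj1 (proj2 k)) (proj1 (proj2 (proj2 k)))
    (proj1 (proj2 (proj2 (proj2 k)))) (proj1 (proj2 (proj2 (proj2 (proj2 k)))))
    (proj2 (proj2 (proj2 (proj2 (proj2 k))))).

Lemma V_quot (H : frame) (S : signature) (V : algebra H S -> Prop) (A : Type)
  (hsub : closed_strong_subobjects V) (i : idx V A) : V (Quot (qd i)).
Proof.
case: i => p hp; have [B [iota [VB [h1 h2]]]] := hp.
refine (hsub (Quot (qd (exist _ p hp))) B (fun c : qcar (qd (exist _ p hp)) => eval iota (rep c)) VB _ _ _).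
- apply: quot_map_morph => //.
  + move=> s t h; exact: (proj1 (h1 s t) h).
  + by move=> t /=; rewrite h2; apply: fle_refl.
- apply: quot_map_inj => s t e; exact: (proj2 (h1 s t) e).
- by move=> c /=; rewrite h2.
Qed.

Lemma V_big (H : frame) (S : signature) (V : algebra H S -> Prop) (A : Type)
  (hsub : closed_strong_subobjects V) (hprod : closed_products V) :
  V (Quot (bigq V A)).
Proof.
have VP := hprod _ _ (@V_quot H S V A hsub).
pose g := fun t : term S A => (fun i : idx V A => cls (qd i) t) : prod_alg (fun i => Quot (qd i)).
refine (hsub (Quot (bigq V A)) _ (fun c : qcar (bigq V A) => g (rep c)) VP _ _ _).
- apply: quot_map_morph => //.
  + move=> s t h; apply: functional_extensionality_dep => i; exact/cls_eq.
  + move=> o ts; apply: functional_extensionality_dep => i; rewrite /g /=.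
    symmetry; exact: quot_op_cls.
  + move=> t /=; rewrite /g /=.
    apply: finfI_glb => i; apply: fle_trans (finfI_lb _ i) _.
    have e : (sval i).2 (rep (cls (qd i) t)) = (sval i).2 t := quot_mem_cls (qd i) t.
    rewrite e; exact: fle_refl.
- apply: quot_map_inj => s t e; change (forall i : idx V A, qth (qd i) s t) => i.
  apply/cls_eq; exact: (f_equal (fun f => f i) e).
- move=> c /=; rewrite /g /=; f_equal; apply: functional_extensionality => i.
  exact: quot_mem_cls.
Qed.

Lemma rename_data (A : Type) (a0 : A) (vs : seq A) :
  exists r : A -> nat, forall x, List.In x vs -> List.nth (r x) vs a0 = x.
Proof.
exists (fun x => epsilon (inhabits 0) (fun n => List.nth n vs a0 = x)) => x hx.
apply: (epsilon_spec (inhabits 0) (fun n => List.nth n vs a0 = x)).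
case: (List.In_nth vs x a0 hx) => n [_ e]; by exists n.
Qed.

Definition kidx (H : frame) (S : signature) (V : algebra H S -> Prop) (A : Type)
  (B : algebra H S) (VB : V B) (iota : A -> B) : idx V A :=
  exist _ ((fun s t => eval iota s = eval iota t), (fun t => alg_mem (eval iota t)))
    (ex_intro _ B (ex_intro _ iota (conj VB (conj (fun s t => iff_refl _) (fun t => erefl))))).

Lemma V_model (H : frame) (S : signature) (V : algebra H S -> Prop)
  (hsurj : closed_surj_images V) (hprod : closed_products V)
  (hsub : closed_strong_subobjects V) (A : algebra H S)
  (hA : forall phi : formula H S nat,
      (forall B, V B -> forall iota : nat -> B, sat iota phi) ->
      forall iota : nat -> A, sat iota phi) : V A.
Proof.
case: (classic (inhabited A)) => [[a0]|hne].
- pose g := fun t : term S A => eval (fun a : A => a) t.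
  have G1 : forall s t, qth (bigq V A) s t -> g s = g t.
    move=> s t h; change (forall i : idx V A, qth (qd i) s t) in h.
    have [r hr] := rename_data a0 (fvars s ++ fvars t).
    have prem : forall B, V B -> forall iota : nat -> B, sat iota (@FEq H S nat (rename r s) (rename r t)).
      move=> B VB iota /=; rewrite !eval_rename.
      exact: (h (kidx VB (fun x => iota (r x)))).
    have := hA _ prem (fun n => List.nth n (fvars s ++ fvars t) a0).
    rewrite /= !eval_rename => e.
    have es : g s = eval (fun x => List.nth (r x) (fvars s ++ fvars t) a0) s.
      apply: eval_agree => x hx; symmetry; apply: hr; apply: List.in_or_app; by left.
    have et : g t = eval (fun x => List.nth (r x) (fvars s ++ fvars t) a0) t.
      apply: eval_agree => x hx; symmetry; apply: hr; apply: List.in_or_app; by right.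
    by rewrite es et; exact: e.
  have G4 : forall t, fle (qmu (bigq V A) t) (alg_mem (g t)).
    move=> t; have [r hr] := rename_data a0 (fvars t).
    have prem : forall B, V B -> forall iota : nat -> B, sat iota (@FMem H S nat (qmu (bigq V A) t) (rename r t)).
      move=> B VB iota /=; rewrite !eval_rename.
      apply: fle_trans (finfI_lb _ (kidx VB (fun x => iota (r x)))) _; exact: fle_refl.
    have := hA _ prem (fun n => List.nth n (fvars t) a0).
    rewrite /= !eval_rename => e.
    have et : g t = eval (fun x => List.nth (r x) (fvars t) a0) t.
      apply: eval_agree => x hx; symmetry; exact: hr.
    by rewrite et; exact: e.
  refine (hsurj (Quot (bigq V A)) A (fun c : qcar (bigq V A) => g (rep c))
            (@V_big H S V A hsub hprod) _ _).
  + by apply: quot_map_morph.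
  + apply: quot_map_surj => // y; by exists (TVar S y).
- have VP := hprod False (fun i => match i with end) (fun i => match i with end).
  refine (hsub A _ (fun a => False_rect _ (hne (inhabits a))) VP _ _ _).
  + split; [|split].
    * move=> x; case: (hne (inhabits x)).
    * move=> c; case: (hne (inhabits (alg_const A c))).
    * move=> o a; case: (hne (inhabits (a (Ordinal (sig_ar_pos o))))).
  + move=> x; case: (hne (inhabits x)).
  + move=> x; case: (hne (inhabits x)).
Qed.

Theorem corollary59 (H : frame) (S : signature) (V : algebra H S -> Prop) :
  (closed_surj_images V /\ closed_products V /\ closed_strong_subobjects V)
  <->
  (exists (X : Type) (L : theory H S X),
      unconditional L /\ forall A : algebra H S, V A <-> is_model L A).
Proof.
split.
- move=> [hsurj [hprod hsub]].
  exists nat, (fun s : sequent H S nat => (forall phi, ~ seq_hyps s phi) /\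
     forall B, V B -> forall iota : nat -> B, sat iota (seq_concl s)).
  split; first by move=> s [h _].
  move=> A; split.
  + move=> VA s [_ h] iota _; exact: h.
  + move=> hm; apply: V_model => // phi hphi iota.
    apply: (hm (Sequent (fun _ => False) phi)); first by split; [move=> ? /= [] | exact: hphi].
    by [].
- move=> [X [L [hu hV]]].
  have [h1 [h2 h3]] := models_closed hu.
  split; [|split].
  + move=> A B e /hV hA he hs; apply/hV; exact: h1 he hs.
  + move=> I A hA; apply/hV; apply: h2 => i; exact/hV.
  + move=> A B m /hV hB hm hi hmem; apply/hV; exact: h3 hm hi hmem.
Qed.
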